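(* Let $n\in\mathbb{N}$ and let $R$ be a $2n$-adically closed ring. If $p,q$ are prime ideals of $R$ (not necessarily distinct), then either $p+q=R$ or $p+q$ is a prime ideal.
   Context: All rings are commutative with $1$; $\mathbb{N}=\{1,2,\dots\}$. A ring $R$ is $k$-adically closed if every monic polynomial of degree $k$ with coefficients in $R$ has a root in $R$. *)

(* Defs.v *)
From HB Require Import structures.
From mathcomp Require Import all_boot all_order all_algebra.
Set Implicit Arguments. Unset Strict Implicit. Unset Printing Implicit Defensive.
Import GRing.Theory.
Local Open Scope ring_scope.

Definition is_ideal (R : comNzRingType) (I : R -> Prop) : Prop :=
  [/\ I 0,
      (forall x y, I x -> I y -> I (x + y)),
      (forall x, I x -> I (- x)) &
      (forall r x, I x -> I (r * x))].

Definition is_prime_ideal (R : comNzRingType) (I : R -> Prop) : Prop :=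
  [/\ is_ideal I, ~ I 1 &
      (forall x y, I (x * y) -> I x \/ I y)].

Definition ideal_add (R : comNzRingType) (p q : R -> Prop) : R -> Prop :=
  fun x => exists a b, [/\ p a, q b & x = a + b].

Definition adically_closed (k : nat) (R : comNzRingType) : Prop :=
  forall P : {poly R}, P \is monic -> size P = k.+1 -> exists x : R, root P x.

(* Main.v *)
Require Import Defs.
From HB Require Import structures.
From mathcomp Require Import all_boot all_order all_algebra.
From mathcomp Require Import ring zify.
From Stdlib Require Import Classical.
Local Open Scope ring_scope.
Import GRing.Theory.

Lemma key_poly (n : nat) (R : comNzRingType) (c s : R) :
  (0 < n)%N -> adically_closed (2 * n) R ->
  exists y : R, y * y - c * y + s = 0.
Proof.
move=> n0 Hc.
set Q : {poly R} := (- c) *: 'X^n + s%:P.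
have sQ : (size Q < (2 * n).+1)%N.
  apply: (leq_ltn_trans (size_polyD _ _)).
  rewrite gtn_max; apply/andP; split.
    apply: (leq_ltn_trans (size_scale_leq _ _)); rewrite size_polyXn.
    rewrite ltnS; lia.
  apply: (leq_ltn_trans (size_polyC_leq1 _)); lia.
have sP : size ('X^(2 * n) + Q) = (2 * n).+1.
  by rewrite size_addl size_polyXn.
have mP : ('X^(2 * n) + Q) \is monic.
  by rewrite monicE lead_coefDl ?size_polyXn // lead_coefXn.
have [x /rootP Hx] := Hc _ mP sP.
exists (x ^+ n).
move: Hx; rewrite /Q !hornerE mulnC exprM.
move=> Hx; rewrite -[RHS]Hx; change (x ^+ n * x ^+ n - c * x ^+ n + s = x ^+ n ^+ 2 + (- c * x ^+ n) + s); ring.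
Qed.

Theorem mainTheorem3 (n : nat) (R : comNzRingType) (p q : R -> Prop) :
  (0 < n)%N -> adically_closed (2 * n) R ->
  is_prime_ideal p -> is_prime_ideal q ->
  (forall x : R, ideal_add p q x) \/ is_prime_ideal (ideal_add p q).
Proof.
move=> n0 Hc [[p0 pD pN pM] p1 pP] [[q0 qD qN qM] q1 qP].
have peq : forall x y, x = y -> p x -> p y by move=> x y ->.
have qeq : forall x y, x = y -> q x -> q y by move=> x y ->.
have Iid : is_ideal (ideal_add p q).
  split.
  - by exists 0, 0; split => //; rewrite addr0.
  - move=> x y [a [b [pa qb ->]]] [a' [b' [pa' qb' ->]]].
    exists (a + a'), (b + b'); split; [exact: pD|exact: qD|ring].
  - move=> x [a [b [pa qb ->]]]; exists (- a), (- b); split;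
      [exact: pN|exact: qN|ring].
  - move=> r x [a [b [pa qb ->]]]; exists (r * a), (r * b); split;
      [exact: pM|exact: qM|ring].
case: (classic (ideal_add p q 1)) => H1.
  left=> x; move: H1 => [a [b [pa qb E]]].
  exists (x * a), (x * b); split; [exact: pM|exact: qM|].
  by rewrite -mulrDr -E mulr1.
right; split => //.
move=> a b [s [t [ps qt E]]].
have [y Hy] := @key_poly n R (a + b) s n0 Hc.
have Hp : p (y * (y - (a + b))).
  have -> : y * (y - (a + b)) = (y * y - (a + b) * y + s) - s by ring.
  by rewrite Hy sub0r; exact: pN.
have Hq : q ((y - a) * (y - b)).
  have -> : (y - a) * (y - b) = (y * y - (a + b) * y + s) + (a * b - s) by ring.
  by rewrite Hy add0r E addrC addKr.
case: (pP _ _ Hp) => Py; case: (qP _ _ Hq) => Qy.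
- left; exists y, (- (y - a)); split => //; [exact: qN|ring].
- right; exists y, (- (y - b)); split => //; [exact: qN|ring].
- right; exists (- (y - (a + b))), (y - a); split => //; [exact: pN|ring].
- left; exists (- (y - (a + b))), (y - b); split => //; [exact: pN|ring].
Qed.
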